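(* Let $\alpha\geq\beta\geq\gamma$ be positive integers and let $$G=\Bigl\langle a,b\,\Bigm|\, a^{2^{\alpha}}=b^{2^{\beta}}=[a,b]^{2^{\gamma}}=[a,b,a]=[a,b,b]=e\Bigr\rangle.$$ Then $G$ is capable if and only if either $\alpha=\beta$, or $\alpha=\beta+1$ and $\gamma=\beta$.
   Context: A group $G$ is called capable if there exists a group $K$ such that $K/Z(K)\cong G$. Commutators are $[x,y]=x^{-1}y^{-1}xy$, left-normed: $[x,y,z]=[[x,y],z]$. *)

(* Defs.v *)
From mathcomp Require Import all_boot all_fingroup.
Set Implicit Arguments. Unset Strict Implicit. Unset Printing Implicit Defensive.

Record abs_group := AbsGroup {
  ag_carrier :> Type;
  ag_mul : ag_carrier -> ag_carrier -> ag_carrier;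
  ag_inv : ag_carrier -> ag_carrier;
  ag_one : ag_carrier;
  ag_mulA : forall x y z, ag_mul x (ag_mul y z) = ag_mul (ag_mul x y) z;
  ag_mul1 : forall x, ag_mul ag_one x = x;
  ag_mulV : forall x, ag_mul (ag_inv x) x = ag_one
}.

Definition ag_center (K : abs_group) (z : K) : Prop :=
  forall y : K, ag_mul z y = ag_mul y z.

(* K/Z(K) is isomorphic to G (a subgroup of a finGroupType):
   by the first isomorphism theorem, there is a homomorphism from K
   onto G whose kernel is exactly Z(K). *)
Definition central_quotient_iso (K : abs_group) (gT : finGroupType)
    (G : {set gT}) : Prop :=
  exists f : K -> gT,
    [/\ (forall x y : K, f (ag_mul x y) = (f x * f y)%g),
        (forall x : K, f x \in G),
        (forall g, g \in G -> exists x : K, f x = g) &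
        (forall x : K, f x = 1%g <-> ag_center x)].

Definition capable (gT : finGroupType) (G : {set gT}) : Prop :=
  exists K : abs_group, central_quotient_iso K G.

(* Main.v *)
Require Import Defs.
From mathcomp Require Import all_boot all_fingroup.
From HB Require Import structures.
From mathcomp Require Import all_solvable all_algebra.
From mathcomp Require Import ring lra zify.
From mathcomp Require Import boolp.
Set Implicit Arguments. Unset Strict Implicit. Unset Printing Implicit Defensive.

Module P_M.
Set Implicit Arguments. Unset Strict Implicit. Unset Printing Implicit Defensive.
Import GRing.Theory.

Section MDef.
Variables c d e : nat.
Definition Cm := 2 ^ c.+1.
Definition Bm := Cm * 2 ^ d.
Definition Am := Bm * 2 ^ e.
Lemma Cm_gt1 : 1 < Cm. Proof. by rewrite /Cm -{1}(expn0 2) ltn_exp2l. Qed.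
Lemma Bm_gt1 : 1 < Bm. Proof. by rewrite /Bm (leq_trans Cm_gt1) // leq_pmulr ?expn_gt0. Qed.
Lemma Am_gt1 : 1 < Am. Proof. by rewrite /Am (leq_trans Bm_gt1) // leq_pmulr ?expn_gt0. Qed.
Lemma CdvdB : Cm %| Bm. Proof. exact: dvdn_mulr. Qed.
Lemma CdvdA : Cm %| Am. Proof. by rewrite /Am dvdn_mulr // CdvdB. Qed.

Definition castC (m : nat) : 'Z_Cm := (m%:R)%R.

Lemma castC_mod m n : Cm %| n -> castC (m %% n) = castC m.
Proof.
move=> dv; apply: val_inj; rewrite /castC /= !Zp_nat /= Zp_cast ?Cm_gt1 //.
by rewrite modn_dvdm.
Qed.

Lemma castCD_A (i i' : 'Z_Am) : castC (val (i + i')%R) = (castC (val i) + castC (val i'))%R.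
Proof.
rewrite /= castC_mod; first by rewrite /castC natrD.
by rewrite Zp_cast ?Am_gt1 // CdvdA.
Qed.
Lemma castCD_B (i i' : 'Z_Bm) : castC (val (i + i')%R) = (castC (val i) + castC (val i'))%R.
Proof.
rewrite /= castC_mod; first by rewrite /castC natrD.
by rewrite Zp_cast ?Bm_gt1 // CdvdB.
Qed.
Lemma castC0 : castC 0 = 0%R. Proof. by []. Qed.

Definition Mt := ('Z_Am * 'Z_Bm * 'Z_Cm)%type.
End MDef.

Section MGroup.
Variables c d e : nat.
Local Notation T := (Mt c d e).
Local Notation cC := (@castC c).
Definition mulM (s t : T) : T :=
  let: (i, j, k) := s in let: (i', j', k') := t in
  ((i + i')%R, (j + j')%R, (k + k' + cC (val j) * cC (val i'))%R).
Definition oneM : T := (0%R, 0%R, 0%R).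
Definition invM (s : T) : T :=
  let: (i, j, k) := s in ((- i)%R, (- j)%R, (- k + cC (val j) * cC (val i))%R).

Lemma castCN_B (j : 'Z_(Bm c d)) : cC (val (- j)%R) = (- cC (val j))%R.
Proof.
apply/eqP; rewrite -GRing.addr_eq0 -castCD_B GRing.addNr //.
Qed.

Lemma castCN_A (j : 'Z_(Am c d e)) : cC (val (- j)%R) = (- cC (val j))%R.
Proof.
apply/eqP; rewrite -GRing.addr_eq0 -castCD_A GRing.addNr //.
Qed.

Lemma mulMA : associative mulM.
Proof.
move=> [[i j] k] [[i' j'] k'] [[i'' j''] k''] /=.
rewrite !GRing.addrA castCD_A castCD_B; congr (_, _, _).
ring.
Qed.
Lemma mul1M : left_id oneM mulM.
Proof.
move=> [[i j] k] /=; rewrite !GRing.add0r; congr (_, _, _).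
by rewrite castC0 GRing.mul0r GRing.addr0.
Qed.
Lemma mulVM : left_inverse oneM invM mulM.
Proof.
move=> [[i j] k] /=; rewrite castCN_B !GRing.addNr; congr (_, _, _).
ring.
Qed.
HB.instance Definition _ := Finite.on T.
HB.instance Definition _ := Finite_isGroup.Build T mulMA mul1M mulVM.
End MGroup.


Section MPres.
Variables c d e : nat.
Local Notation T := (Mt c d e).
Local Notation cC := (@castC c).
Local Open Scope group_scope.
Lemma mulME (s t : T) : s * t = mulM s t. Proof. by []. Qed.
Lemma invME (s : T) : s^-1 = invM s. Proof. by []. Qed.
Lemma oneME : (1 : T) = oneM c d e. Proof. by []. Qed.

Definition aM : T := (1%R, 0%R, 0%R).
Definition bM : T := (0%R, 1%R, 0%R).

Lemma aMX n : aM ^+ n = ((n%:R)%R, 0%R, 0%R).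
Proof.
elim: n => [|n IH]; first by [].
rewrite expgS IH mulME /=; congr (_, _, _).
- by rewrite -GRing.natr1 GRing.addrC.
- by rewrite GRing.addr0.
- by rewrite castC0 GRing.mul0r !GRing.addr0.
Qed.
Lemma bMX n : bM ^+ n = (0%R, (n%:R)%R, 0%R).
Proof.
elim: n => [|n IH]; first by [].
rewrite expgS IH mulME /=; congr (_, _, _).
- by rewrite GRing.addr0.
- by rewrite -GRing.natr1 GRing.addrC.
- by rewrite castC0 GRing.mulr0 !GRing.addr0.
Qed.
Lemma mulMP i j k i' j' k' : mulM ((i, j, k) : T) (i', j', k') =
  ((i + i')%R, (j + j')%R, (k + k' + cC (val j) * cC (val i'))%R).
Proof. by []. Qed.
Lemma invMP i j k : invM ((i, j, k) : T) =
  ((- i)%R, (- j)%R, (- k + cC (val j) * cC (val i))%R).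
Proof. by []. Qed.
Lemma castC1A : cC (val (1%R : 'Z_(Am c d e))) = 1%R.
Proof. by rewrite /= castC_mod // Zp_cast ?Am_gt1 // CdvdA. Qed.
Lemma castC1B : cC (val (1%R : 'Z_(Bm c d))) = 1%R.
Proof. by rewrite /= castC_mod // Zp_cast ?Bm_gt1 // CdvdB. Qed.
Lemma castC0A : cC (val (0%R : 'Z_(Am c d e))) = 0%R. Proof. by []. Qed.
Lemma castC0B : cC (val (0%R : 'Z_(Bm c d))) = 0%R. Proof. by []. Qed.

Lemma cME : [~ aM, bM] = (0%R, 0%R, (-1)%R).
Proof.
rewrite /commg /conjg !mulME !invME /aM /bM !(mulMP, invMP).
rewrite !(castCN_B, castC1A, castC1B, castC0A, castC0B).
congr (_, _, _); ring.
Qed.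

Local Notation castE := (castCD_A, castCD_B, castCN_A, castCN_B, castC1A, castC1B, castC0A, castC0B).

Lemma natr_self p : 1 < p -> ((p%:R)%R : 'Z_p) = 0%R.
Proof. by move=> p1; apply: val_inj; rewrite Zp_nat /= Zp_cast // modnn. Qed.

Lemma cMX n : [~ aM, bM] ^+ n = (0%R, 0%R, (- n%:R)%R).
Proof.
rewrite cME; elim: n => [|n IH]; first by rewrite /= GRing.oppr0.
rewrite expgS IH mulME mulMP !castE; congr (_, _, _); ring.
Qed.

Lemma M_homg : [set: T] \homg Grp (a : b : (a ^+ Am c d e, b ^+ Bm c d,
                         [~ a, b] ^+ Cm c, [~ a, b, a], [~ a, b, b])).
Proof.
apply/existsP; exists (aM, bM); rewrite /= 5!xpair_eqE /=.
apply/andP; split; [|apply/andP; split; [|apply/andP; split; [|apply/andP; split; [|apply/andP; split]]]].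
- rewrite eqEsubset subsetT /=; apply/subsetP => -[[i j] k] _.
  have -> : ((i, j, k) : T) = aM ^+ val i * bM ^+ val j * [~ aM, bM] ^+ val (- k)%R.
    rewrite aMX bMX cMX !mulME !mulMP !castE !natr_Zp.
    congr (_, _, _); ring.
  by rewrite !groupM ?groupX ?groupR ?mem_gen ?inE ?cycle_id ?orbT.
- by rewrite aMX natr_self // Am_gt1.
- by rewrite bMX natr_self // Bm_gt1.
- by rewrite cMX natr_self ?GRing.oppr0 // Cm_gt1.
- rewrite cME /commg /conjg !mulME !invME /aM !(mulMP, invMP) !castE.
  apply/eqP; congr (_, _, _); ring.
- rewrite cME /commg /conjg !mulME !invME /bM !(mulMP, invMP) !castE.
  apply/eqP; congr (_, _, _); ring.
Qed.

Lemma card_M : #|[set: T]| = (Am c d e * Bm c d * Cm c)%N.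
Proof.
rewrite cardsT /= !card_prod !card_ord !Zp_cast ?Am_gt1 ?Bm_gt1 ?Cm_gt1 //.
Qed.
End MPres.

End P_M.
Import P_M.

Module P_Kraw.
Set Implicit Arguments. Unset Strict Implicit. Unset Printing Implicit Defensive.
Import GRing.Theory Num.Theory.
Local Open Scope ring_scope.

Definition bin2 (z : int) : int := ((z * (z - 1)) %/ 2)%Z.

Lemma bin2E z : bin2 z * 2 = z * (z - 1).
Proof.
rewrite /bin2 divzK //.
have h0 := modz_ge0 z (isT : (2:int) != 0).
have h1 := ltz_pmod z (isT : (0:int) < 2).
have := divz_eq z 2; move: (z %/ 2)%Z (z %% 2)%Z h0 h1 => q r h0 h1 ->.
have [->|->] : r = 0 \/ r = 1 by lia.
  by rewrite addr0 dvdz_mulr // dvdz_mull.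
by rewrite addrK mulrC dvdz_mulr // dvdz_mull.
Qed.

Lemma bin2_inj z y : z * (z - 1) = y * 2 -> bin2 z = y.
Proof. by move=> H; apply: (mulIf (isT : (2:int) != 0)); rewrite bin2E. Qed.

Lemma bin2D a b : bin2 (a + b) = bin2 a + bin2 b + a * b.
Proof. apply: bin2_inj; rewrite mulrDl !mulrDl bin2E bin2E; ring. Qed.
Lemma bin20 : bin2 0 = 0. Proof. by apply: bin2_inj; ring. Qed.
Lemma bin21 : bin2 1 = 0. Proof. by apply: bin2_inj; ring. Qed.
Lemma bin2N a : bin2 (- a) = bin2 a + a.
Proof. apply: bin2_inj; rewrite mulrDl bin2E; ring. Qed.

Definition V := (int * int * int * int * int)%type.
Definition raw (s t : V) : V :=
  let: (n, m, k, p, q) := s in let: (n', m', k', p', q') := t in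
  (n + n', m + m', k + k' - m * n', p + p' + k * n' - m * bin2 n',
   q + q' - n' * bin2 m + (k - m * n') * m').
Definition rawinv (s : V) : V :=
  let: (n, m, k, p, q) := s in
  let k' := - k - m * n in
  (- n, - m, k', - p - k' * n - m * bin2 n, - q + n * bin2 (- m) + k * m).

Lemma rawA s t u : raw (raw s t) u = raw s (raw t u).
Proof.
case: s => [[[[n m] k] p] q]; case: t => [[[[n' m'] k'] p'] q'].
case: u => [[[[n'' m''] k''] p''] q''] /=.
rewrite !bin2D; congr (_, _, _, _, _); ring.
Qed.
Lemma raw0 t : raw (0, 0, 0, 0, 0) t = t.
Proof.
case: t => [[[[n m] k] p] q] /=; rewrite bin20; congr (_, _, _, _, _); ring.
Qed.
Lemma rawV t : raw (rawinv t) t = (0, 0, 0, 0, 0).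
Proof.
case: t => [[[[n m] k] p] q] /=; rewrite bin2N; congr (_, _, _, _, _); ring.
Qed.

End P_Kraw.
Import P_Kraw.

Module P_Knf.
Set Implicit Arguments. Unset Strict Implicit. Unset Printing Implicit Defensive.
Import GRing.Theory Num.Theory.
Local Open Scope ring_scope.

Section NF.
Variables d1 e f d2 h d3 : int.
Hypotheses (hd1 : 0 < d1) (hd2 : 0 < d2) (hd3 : 0 < d3).

Definition nf3 (k p q : int) : int * int * int :=
  let t1 := (k %/ d1)%Z in let p0 := p - t1 * e in let t2 := (p0 %/ d2)%Z in
  let q0 := q - t1 * f - t2 * h in ((k %% d1)%Z, (p0 %% d2)%Z, (q0 %% d3)%Z).

Definition memL (k p q : int) : Prop :=
  exists a b c : int, [/\ k = a * d1, p = a * e + b * d2 & q = a * f + b * h + c * d3].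

Lemma memL0 : memL 0 0 0.
Proof. by exists 0, 0, 0; split; ring. Qed.
Lemma memLD k p q k' p' q' : memL k p q -> memL k' p' q' -> memL (k + k') (p + p') (q + q').
Proof.
move=> [a [b [c [-> -> ->]]]] [a' [b' [c' [-> -> ->]]]].
by exists (a + a'), (b + b'), (c + c'); split; ring.
Qed.
Lemma memLZ z k p q : memL k p q -> memL (z * k) (z * p) (z * q).
Proof.
move=> [a [b [c [-> -> ->]]]].
by exists (z * a), (z * b), (z * c); split; ring.
Qed.
Lemma memLN k p q : memL k p q -> memL (- k) (- p) (- q).
Proof. by move=> /(memLZ (-1)); rewrite !mulN1r. Qed.
Lemma memLB k p q k' p' q' : memL k p q -> memL k' p' q' -> memL (k - k') (p - p') (q - q').
Proof. by move=> H1 /memLN; apply: memLD. Qed.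
Lemma memL_eq k p q k' p' q' : k = k' -> p = p' -> q = q' -> memL k p q -> memL k' p' q'.
Proof. by move=> -> -> ->. Qed.

Lemma nf3_memL k p q : memL (k - (nf3 k p q).1.1) (p - (nf3 k p q).1.2) (q - (nf3 k p q).2).
Proof.
rewrite /nf3 /=.
move: (k %/ d1)%Z (k %% d1)%Z (divz_eq k d1) => t1 r1 E1.
move: ((p - t1 * e) %/ d2)%Z ((p - t1 * e) %% d2)%Z (divz_eq (p - t1 * e) d2) => t2 r2 E2.
move: ((q - t1 * f - t2 * h) %/ d3)%Z ((q - t1 * f - t2 * h) %% d3)%Z
  (divz_eq (q - t1 * f - t2 * h) d3) => t3 r3 E3.
exists t1, t2, t3; split.
- rewrite E1; ring.
- have -> : r2 = p - t1 * e - t2 * d2 by rewrite E2; ring.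
  ring.
- have -> : r3 = q - t1 * f - t2 * h - t3 * d3 by rewrite E3; ring.
  ring.
Qed.

Lemma nf3_eq k p q k' p' q' : memL (k - k') (p - p') (q - q') -> nf3 k p q = nf3 k' p' q'.
Proof.
move=> [a [b [c [Hk Hp Hq]]]].
have -> : k = a * d1 + k' by rewrite -Hk; ring.
have -> : p = a * e + b * d2 + p' by rewrite -Hp; ring.
have -> : q = a * f + b * h + c * d3 + q' by rewrite -Hq; ring.
have d1n : d1 != 0 by rewrite lt0r_neq0.
have d2n : d2 != 0 by rewrite lt0r_neq0.
have d3n : d3 != 0 by rewrite lt0r_neq0.
rewrite /nf3 divzMDl // modzMDl.
set t1 := (k' %/ d1)%Z.
have -> : a * e + b * d2 + p' - (a + t1) * e = b * d2 + (p' - t1 * e) by ring.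
rewrite divzMDl // modzMDl.
set t2 := ((p' - t1 * e) %/ d2)%Z.
have -> : a * f + b * h + c * d3 + q' - (a + t1) * f - (b + t2) * h = c * d3 + (q' - t1 * f - t2 * h) by ring.
by rewrite modzMDl.
Qed.

Lemma nf3_memL_eq k p q k' p' q' : nf3 k p q = nf3 k' p' q' -> memL (k - k') (p - p') (q - q').
Proof.
move=> E; have H1 := nf3_memL k p q; have H2 := nf3_memL k' p' q'.
rewrite E in H1; have := memLB H1 H2.
apply: memL_eq; ring.
Qed.

Lemma nf3_idem k p q :
  nf3 (nf3 k p q).1.1 (nf3 k p q).1.2 (nf3 k p q).2 = nf3 k p q.
Proof.
apply: nf3_eq; have := memLN (nf3_memL k p q); apply: memL_eq; ring.
Qed.

Hypotheses (inv1 : memL 0 d1 0) (inv2 : memL 0 0 d1).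

Lemma memL_shift dk dp dq x y : memL dk dp dq -> memL dk (dp + dk * x) (dq + dk * y).
Proof.
move=> H; have H' := H; case: H' => [a [b [c [Ek _ _]]]].
have := memLD H (memLD (memLZ (a * x) inv1) (memLZ (a * y) inv2)).
by apply: memL_eq; rewrite Ek; ring.
Qed.

Definition NF (v : V) : V :=
  let: (n, m, k, p, q) := v in
  (n, m, (nf3 k p q).1.1, (nf3 k p q).1.2, (nf3 k p q).2).

Arguments nf3 : simpl never.
Arguments NF : simpl never.
Lemma NFE n m k p q : NF (n, m, k, p, q) = (n, m, (nf3 k p q).1.1, (nf3 k p q).1.2, (nf3 k p q).2).
Proof. by []. Qed.

Lemma NF_eq n m k p q n' m' k' p' q' : n = n' -> m = m' ->
  memL (k - k') (p - p') (q - q') -> NF (n, m, k, p, q) = NF (n', m', k', p', q').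
Proof. by move=> -> -> /nf3_eq E; rewrite /NF E. Qed.

Lemma NF_idem v : NF (NF v) = NF v.
Proof. case: v => [[[[n m] k] p] q]; by rewrite /NF nf3_idem. Qed.

Lemma NF_rawl s t : NF (raw (NF s) t) = NF (raw s t).
Proof.
case: s => [[[[n m] k] p] q]; case: t => [[[[n' m'] k'] p'] q'].
rewrite [NF (n, m, k, p, q)]NFE.
have := memLN (nf3_memL k p q).
move: (nf3 k p q) => [[k1 p1] q1] /= H.
apply: NF_eq; try ring.
have := memL_shift n' m' H; apply: memL_eq; ring.
Qed.

Lemma NF_rawr s t : NF (raw s (NF t)) = NF (raw s t).
Proof.
case: s => [[[[n m] k] p] q]; case: t => [[[[n' m'] k'] p'] q'].
rewrite [NF (n', m', k', p', q')]NFE.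
have := memLN (nf3_memL k' p' q').
move: (nf3 k' p' q') => [[k1 p1] q1] /= H.
apply: NF_eq; try ring.
by apply: memL_eq H; ring.
Qed.

Definition reduced (v : V) : bool := NF v == v.
Lemma NF_red v : reduced (NF v). Proof. by rewrite /reduced NF_idem. Qed.

Definition Kc := {v : V | reduced v}.
Definition Kmul (s t : Kc) : Kc := exist _ (NF (raw (val s) (val t))) (NF_red _).
Definition Kinv (s : Kc) : Kc := exist _ (NF (rawinv (val s))) (NF_red _).
Lemma NF0 : NF (0, 0, 0, 0, 0) = (0, 0, 0, 0, 0).
Proof. by rewrite NFE /nf3 /= !(div0z, mod0z, mul0r, subr0). Qed.
Lemma red0 : reduced (0, 0, 0, 0, 0). Proof. by rewrite /reduced NF0. Qed.
Definition Kone : Kc := exist _ (0, 0, 0, 0, 0) red0.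

Lemma KmulA s t u : Kmul s (Kmul t u) = Kmul (Kmul s t) u.
Proof. by apply: val_inj => /=; rewrite NF_rawl NF_rawr rawA. Qed.
Lemma Kmul1 s : Kmul Kone s = s.
Proof. case: s => v hv; apply: val_inj; change (NF (raw (0, 0, 0, 0, 0) v) = v); rewrite raw0; exact/eqP. Qed.
Lemma KmulV s : Kmul (Kinv s) s = Kone.
Proof. by apply: val_inj => /=; rewrite NF_rawl rawV NF0. Qed.


Lemma Kcomm (s t : Kc) :
  let: (n, m, k, p, q) := val t in let: (n', m', k', p', q') := val s in
  Kmul t s = Kmul s t <->
  memL (m' * n - m * n') (k * n' - m * bin2 n' - k' * n + m' * bin2 n)
       (- n' * bin2 m + (k - m * n') * m' + n * bin2 m' - (k' - m' * n) * m).
Proof.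
case: t => [[[[[n m] k] p] q] ht]; case: s => [[[[[n' m'] k'] p'] q'] hs] /=.
split.
- move=> E; have := congr1 val E => /= /(congr1 (fun v : V => (v.1.1.2, v.1.2, v.2))).
  rewrite !NFE /= => /nf3_memL_eq; apply: memL_eq; ring.
- move=> H; apply: val_inj => /=; apply: NF_eq; try ring.
  by apply: memL_eq H; ring.
Qed.

Lemma NF_nm n m : NF (n, m, 0, 0, 0) = (n, m, 0, 0, 0).
Proof. by rewrite NFE /nf3 /= !(div0z, mod0z, mul0r, subr0). Qed.
Lemma red_nm n m : reduced (n, m, 0, 0, 0). Proof. by rewrite /reduced NF_nm. Qed.
Definition Kx : Kc := exist _ (1, 0, 0, 0, 0) (red_nm 1 0).
Definition Ky : Kc := exist _ (0, 1, 0, 0, 0) (red_nm 0 1).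

Lemma central_nec (t : Kc) : (forall s, Kmul t s = Kmul s t) ->
  let: (n, m, k, p, q) := val t in
  memL (- m) k (- bin2 m) /\ memL n (bin2 n) (k + n * m).
Proof.
move=> C; have := Kcomm Kx t; have := Kcomm Ky t.
case: t C => [[[[[n m] k] p] q] ht] C /= [] /(_ (C _)) H2 _ [] /(_ (C _)) H1 _.
split.
- by apply: memL_eq H1; rewrite ?bin20 ?bin21; ring.
- by apply: memL_eq H2; rewrite ?bin20 ?bin21; ring.
Qed.

Lemma central_suff (t : Kc) :
  let: (n, m, k, p, q) := val t in
  memL (- m) k (- bin2 m) -> memL n (bin2 n) (k + n * m) ->
  memL 0 n 0 -> memL 0 0 n -> memL 0 m 0 -> memL 0 0 m ->
  forall s, Kmul t s = Kmul s t.
Proof.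
case: t => [[[[[n m] k] p] q] ht] /= H1 H2 H3 H4 H5 H6 s.
have := Kcomm s (exist _ (n, m, k, p, q) ht).
case: s => [[[[[n' m'] k'] p'] q'] hs] /= [] _; apply.
have := memLD (memLZ n' H1) (memLD (memLZ m' H2) (memLD (memLZ (- k') (memLD H3 H6))
   (memLD (memLZ (- bin2 n') H5) (memLD (memLZ (bin2 m') H4) (memLZ (- (m' * n')) H6))))).
apply: memL_eq; ring.
Qed.
End NF.

End P_Knf.
Import P_Knf.

Module P_Kcases.
Set Implicit Arguments. Unset Strict Implicit. Unset Printing Implicit Defensive.
Import GRing.Theory Num.Theory.
Local Open Scope ring_scope.

Lemma bin2_2H H j : bin2 (2 * H * j) = H * j * (2 * H * j - 1).
Proof. by apply: bin2_inj; ring. Qed.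
Lemma bin2_2Hn H j : bin2 (- (2 * H * j)) = H * j * (2 * H * j + 1).
Proof. by apply: bin2_inj; ring. Qed.

Tactic Notation "wit" uconstr(a) uconstr(b) uconstr(c) := exists (a : int), (b : int), (c : int); split; ring.

(* Case 2 : alpha = beta = gamma ; A = B = C = 2H *)
Section Case2.
Variable H : int.
Hypothesis H0 : 0 < H.
Local Notation mL := (memL (2 * H) H 0 H H (2 * H)).

Lemma c2_inv1 : mL 0 (2 * H) 0. Proof. by wit 0 2 (-1). Qed.
Lemma c2_inv2 : mL 0 0 (2 * H). Proof. by wit 0 0 1. Qed.

Lemma c2_P1 n m k : mL (- m) k (- bin2 m) -> mL n (bin2 n) (k + n * m) ->
  [/\ (2 * H %| n)%Z, (2 * H %| m)%Z & (2 * H %| k)%Z].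
Proof.
move=> [a [b [c [Em Ek Eq]]]] [a' [b' [c' [En _ _]]]].
have Hn : H != 0 by rewrite lt0r_neq0.
have Em' : m = 2 * H * (- a) by rewrite -[m]opprK Em; ring.
rewrite Em' bin2_2H in Eq.
have Eb : b = - a * (2 * H * a + 1) - 2 * c.
  apply: (mulfI Hn).
  have -> : H * b = - (H * - a * (2 * H * - a - 1)) - c * (2 * H) by rewrite Eq; ring.
  ring.
split; apply/dvdzP.
- by exists a'; rewrite En; ring.
- by exists (- a); rewrite Em'; ring.
- by exists (- H * a * a - c); rewrite Ek Eb; ring.
Qed.

Lemma c2_P2 n m k : (2 * H %| n)%Z -> (2 * H %| m)%Z -> (2 * H %| k)%Z ->
  mL (- m) k (- bin2 m) /\ mL n (bin2 n) (k + n * m) /\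
      mL 0 n 0 /\ mL 0 0 n /\ mL 0 m 0 /\ mL 0 0 m.
Proof.
move=> /dvdzP[i ->] /dvdzP[j ->] /dvdzP[l ->].
rewrite -!(mulrC (2 * H)) !bin2_2H; split; last split; last split; last split; last split.
- by wit (- j) (2 * l + j) (- H * j * j - l).
- by wit i (2 * H * i * i - 2 * i) (l + 2 * H * i * j - H * i * i + i).
- by wit 0 (2 * i) (- i).
- by wit 0 0 i.
- by wit 0 (2 * j) (- j).
- by wit 0 0 j.
Qed.
End Case2.

(* Case 3 : alpha = beta + 1, gamma = beta ; A = 4H, B = C = 2H *)
Section Case3.
Variable H : int.
Hypothesis H0 : 0 < H.
Local Notation mL := (memL (2 * H) 0 H (2 * H) 0 (2 * H)).

Lemma c3_inv1 : mL 0 (2 * H) 0. Proof. by wit 0 1 0. Qed.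
Lemma c3_inv2 : mL 0 0 (2 * H). Proof. by wit 0 0 1. Qed.

Lemma c3_P1 n m k : mL (- m) k (- bin2 m) -> mL n (bin2 n) (k + n * m) ->
  [/\ (4 * H %| n)%Z, (2 * H %| m)%Z & (2 * H %| k)%Z].
Proof.
move=> [a [b [c [Em Ek Eq]]]] [a' [b' [c' [En Ep _]]]].
have Hn : H != 0 by rewrite lt0r_neq0.
have En' : n = 2 * H * a' by rewrite En; ring.
rewrite En' bin2_2H in Ep.
have Ea : a' = 2 * H * a' * a' - 2 * b'.
  apply: (mulfI Hn).
  have -> : H * a' = 2 * H * a' * a' * H - H * a' * (2 * H * a' - 1) by ring.
  rewrite Ep; ring.
split; apply/dvdzP.
- by exists (H * a' * a' - b'); rewrite En' {1}Ea; ring.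
- by exists (- a); rewrite -[m]opprK Em; ring.
- by exists b; rewrite Ek; ring.
Qed.

Lemma c3_P2 n m k : (4 * H %| n)%Z -> (2 * H %| m)%Z -> (2 * H %| k)%Z ->
  mL (- m) k (- bin2 m) /\ mL n (bin2 n) (k + n * m) /\
      mL 0 n 0 /\ mL 0 0 n /\ mL 0 m 0 /\ mL 0 0 m.
Proof.
move=> /dvdzP[i ->] /dvdzP[j ->] /dvdzP[l ->].
have -> : i * (4 * H) = 2 * H * (2 * i) by ring.
rewrite -!(mulrC (2 * H)) !bin2_2H; split; last split; last split; last split; last split.
- by wit (- j) l (- H * j * j + j).
- by wit (2 * i) (i * (4 * H * i - 1)) (l + 4 * H * i * j - i).
- by wit 0 (2 * i) 0.
- by wit 0 0 (2 * i).
- by wit 0 j 0.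
- by wit 0 0 j.
Qed.
End Case3.

(* Case 1 : alpha = beta > gamma ; A = B = 2H, H = C * r *)
Section Case1.
Variables Cc r : int.
Hypotheses (C0 : 0 < Cc) (r0 : 0 < r).
Local Notation H := (Cc * r).
Local Notation mL := (memL (2 * H) 0 0 Cc 0 Cc).

Lemma c1_inv1 : mL 0 (2 * H) 0. Proof. by wit 0 (2 * r) 0. Qed.
Lemma c1_inv2 : mL 0 0 (2 * H). Proof. by wit 0 0 (2 * r). Qed.

Lemma c1_P1 n m k : mL (- m) k (- bin2 m) -> mL n (bin2 n) (k + n * m) ->
  [/\ (2 * H %| n)%Z, (2 * H %| m)%Z & (Cc %| k)%Z].
Proof.
move=> [a [b [c [Em Ek Eq]]]] [a' [b' [c' [En Ep _]]]].
split; apply/dvdzP.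
- by exists a'; rewrite En; ring.
- by exists (- a); rewrite -[m]opprK Em; ring.
- by exists b; rewrite Ek; ring.
Qed.

Lemma c1_P2 n m k : (2 * H %| n)%Z -> (2 * H %| m)%Z -> (Cc %| k)%Z ->
  mL (- m) k (- bin2 m) /\ mL n (bin2 n) (k + n * m) /\
      mL 0 n 0 /\ mL 0 0 n /\ mL 0 m 0 /\ mL 0 0 m.
Proof.
move=> /dvdzP[i ->] /dvdzP[j ->] /dvdzP[l ->].
rewrite -!(mulrC (2 * H)) !bin2_2H; split; last split; last split; last split; last split.
- by wit (- j) l (- r * j * (2 * H * j - 1)).
- by wit i (r * i * (2 * H * i - 1)) (l + 4 * H * r * i * j).
- by wit 0 (2 * r * i) 0.
- by wit 0 0 (2 * r * i).
- by wit 0 (2 * r * j) 0.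
- by wit 0 0 (2 * r * j).
Qed.
End Case1.

End P_Kcases.
Import P_Kcases.

Module P_Gside.
Set Implicit Arguments. Unset Strict Implicit. Unset Printing Implicit Defensive.
Import GRing.Theory Num.Theory.
Local Open Scope ring_scope.

Definition cong (N : nat) (x y : int) : Prop := (N%:Z %| x - y)%Z.

Lemma cong_refl N x : cong N x x.
Proof. by rewrite /cong GRing.subrr dvdz0. Qed.
Lemma cong_sym N x y : cong N x y -> cong N y x.
Proof. by rewrite /cong -GRing.opprB rpredN. Qed.
Lemma cong_trans N x y z : cong N x y -> cong N y z -> cong N x z.
Proof.
rewrite /cong => H1 H2; have := rpredD H1 H2.
by rewrite (_ : (x - y + (y - z) = x - z)%R) //; ring.
Qed.
Lemma congD N x y x' y' : cong N x y -> cong N x' y' -> cong N (x + x') (y + y').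
Proof.
rewrite /cong => H1 H2; have := rpredD H1 H2.
by rewrite (_ : (x - y + (x' - y') = x + x' - (y + y'))%R) //; ring.
Qed.
Lemma congN N x y : cong N x y -> cong N (- x) (- y).
Proof.
rewrite /cong => H1.
by rewrite (_ : (- x - - y = - (x - y))%R) ?rpredN //; ring.
Qed.
Lemma congM N x y x' y' : cong N x y -> cong N x' y' -> cong N (x * x') (y * y').
Proof.
rewrite /cong => H1 H2.
have := rpredD (dvdz_mulr x' H1) (dvdz_mull y H2).
by rewrite (_ : ((x - y) * x' + y * (x' - y') = x * x' - y * y')%R) //; ring.
Qed.
Lemma cong_dvd N N' x y : (N' %| N)%N -> cong N x y -> cong N' x y.
Proof. by move=> dv; apply: dvdz_trans; rewrite dvdzE. Qed.
Lemma cong_mod N x : (0 < N)%N -> cong N (x %% N%:Z)%Z x.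
Proof.
move=> N0; rewrite /cong {2}(divz_eq x N).
rewrite (_ : ((x %% N)%Z - ((x %/ N)%Z * N + (x %% N)%Z) = - (x %/ N)%Z * N)%R).
  by rewrite dvdz_mull.
ring.
Qed.
Lemma cong_abs_mod N x : (0 < N)%N -> cong N (absz (x %% N%:Z)%Z)%:Z x.
Proof.
move=> N0; rewrite gez0_abs; first exact: cong_mod.
have : N%:Z != 0 by lia.
move/modz_ge0; apply.
Qed.

Section GS.
Local Open Scope group_scope.
Variables (gT : finGroupType).

Lemma expg_cong (g : gT) N s t : g ^+ N = 1 -> cong N s%:Z t%:Z -> g ^+ s = g ^+ t.
Proof.
move=> gN; rewrite /cong -eqz_mod_dvd !modz_nat => /eqP[] E.
by rewrite -(expg_mod _ gN) E expg_mod.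
Qed.

Definition ipow (g : gT) (N : nat) (z : int) := g ^+ absz (z %% N%:Z)%Z.

Lemma ipow_cong (g : gT) N z t : (0 < N)%N -> g ^+ N = 1 -> cong N z t%:Z -> ipow g N z = g ^+ t.
Proof.
move=> N0 gN H; apply: (expg_cong gN); apply: cong_trans H.
exact: cong_abs_mod.
Qed.

Lemma ipow_cong2 (g : gT) N z z' : (0 < N)%N -> g ^+ N = 1 -> cong N z z' -> ipow g N z = ipow g N z'.
Proof.
move=> N0 gN H; apply: (ipow_cong N0 gN).
apply: (cong_trans H); exact: cong_sym (cong_abs_mod _ N0).
Qed.

Lemma reorder (x1 x2 x3 x4 x5 x6 e : gT) :
  commute x3 x4 -> commute x3 x5 -> commute e x5 -> commute e (x3 * x6) ->
  x2 * x4 * e = x4 * x2 ->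
  x1 * x2 * x3 * (x4 * x5 * x6) * e = x1 * x4 * (x2 * x5) * (x3 * x6).
Proof.
move=> c34 c35 ce5 ce36 E.
rewrite !mulgA -(mulgA _ x3 x4) c34 mulgA -(mulgA _ x3 x5) c35 mulgA.
rewrite -(mulgA _ x3 x6) -(mulgA _ (x3 * x6) e) -ce36 mulgA.
rewrite -(mulgA _ x5 e) -ce5 mulgA mulgA -(mulgA x1 x2 x4) -(mulgA x1 _ e) E.
by rewrite !mulgA.
Qed.

Section NFG.
Variables (a b : gT) (A B C : nat).
Local Notation c := [~ a, b].
Hypotheses (ca : commute a c) (cb : commute b c).
Definition nfG i j k := a ^+ i * b ^+ j * c ^+ k.

Lemma nfG_mul i j k i' j' k' :
  nfG i j k * nfG i' j' k' * c ^+ (j * i') = nfG (i + i') (j + j') (k + k').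
Proof.
rewrite /nfG !expgD reorder //.
- exact: commuteX2 (commute_sym ca).
- exact: commuteX2 (commute_sym cb).
- exact: commuteX2 (commute_sym cb).
- apply: commuteM; exact: commuteX2.
have := commgC (a ^+ i') (b ^+ j); rewrite commXXg // => ->.
by rewrite mulnC.
Qed.

Hypotheses (A0 : (0 < A)%N) (B0 : (0 < B)%N) (C0 : (0 < C)%N).
Hypotheses (aA : a ^+ A = 1) (bB : b ^+ B = 1) (cC : c ^+ C = 1).
Hypotheses (CA : (C %| A)%N) (CB : (C %| B)%N).

Lemma nfG_mod i j k : nfG i j k = nfG (i %% A) (j %% B) (k %% C).
Proof. by rewrite /nfG !expg_mod. Qed.

Lemma nfG_addc i j k m : nfG i j (k + m) = nfG i j k * c ^+ m.
Proof. by rewrite /nfG expgD mulgA. Qed.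

Lemma nfG_mul2 i j k i' j' k' :
  nfG i j k * nfG i' j' k' = nfG (i + i') (j + j') (k + k' + C.-1 * (j * i')).
Proof.
apply: (@mulIg _ (c ^+ (j * i'))); rewrite nfG_mul [nfG _ _ (_ + C.-1 * _)]nfG_addc -mulgA -expgD.
by rewrite -mulSnr prednK // expgM cC expg1n mulg1.
Qed.

Definition Sn := [set nfG t.1.1 t.1.2 t.2 | t : 'I_A * 'I_B * 'I_C].

Lemma memSn i j k : nfG i j k \in Sn.
Proof.
rewrite nfG_mod; apply/imsetP.
exists (Ordinal (ltn_pmod i A0), Ordinal (ltn_pmod j B0), Ordinal (ltn_pmod k C0)) => //.
Qed.

Lemma Sn_group : group_set Sn.
Proof.
apply/group_setP; split.
  by rewrite (_ : 1 = nfG 0 0 0) ?memSn // /nfG !expg0 !mulg1.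
move=> x y /imsetP[t _ ->] /imsetP[t' _ ->].
by rewrite nfG_mul2 memSn.
Qed.

Definition Pz (n m k : int) :=
  nfG (absz (n %% A%:Z)%Z) (absz (m %% B%:Z)%Z) (absz (k %% C%:Z)%Z).

Lemma Pz_mul n m k n' m' k' :
  Pz n m k * Pz n' m' k' = Pz (n + n') (m + m') (k + k' - m * n').
Proof.
rewrite /Pz.
set i := absz (n %% A%:Z)%Z; set j := absz (m %% B%:Z)%Z; set l := absz (k %% C%:Z)%Z.
set i' := absz (n' %% A%:Z)%Z; set j' := absz (m' %% B%:Z)%Z; set l' := absz (k' %% C%:Z)%Z.
have ci : cong A i%:Z n by apply: cong_abs_mod.
have cj : cong B j%:Z m by apply: cong_abs_mod.
have cl : cong C l%:Z k by apply: cong_abs_mod.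
have ci' : cong A i'%:Z n' by apply: cong_abs_mod.
have cj' : cong B j'%:Z m' by apply: cong_abs_mod.
have cl' : cong C l'%:Z k' by apply: cong_abs_mod.
apply: (@mulIg _ (c ^+ (j * i'))); rewrite nfG_mul -nfG_addc /nfG.
congr (_ * _ * _).
- apply: (expg_cong aA); rewrite PoszD.
  apply: cong_trans (congD ci ci') _; exact: cong_sym (cong_abs_mod _ A0).
- apply: (expg_cong bB); rewrite PoszD.
  apply: cong_trans (congD cj cj') _; exact: cong_sym (cong_abs_mod _ B0).
- apply: (expg_cong cC); rewrite !PoszD PoszM.
  have h1 := cong_abs_mod (k + k' - m * n') C0.
  have h2 : cong C (j%:Z * i'%:Z) (m * n').
    by apply: congM; [apply: cong_dvd cj | apply: cong_dvd ci'].
  have := congD h1 h2.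
  rewrite (_ : (k + k' - m * n' + m * n' = k + k')%R); last by ring.
  move=> h3; apply: cong_trans (congD cl cl') _; exact: cong_sym h3.
Qed.

Canonical Sn_groupC := Group Sn_group.

Lemma Sn_card : (#|Sn| <= A * B * C)%N.
Proof. by apply: leq_trans (leq_imset_card _ _) _; rewrite !card_prod !card_ord. Qed.

Section Gen.
Variable G : {group gT}.
Hypothesis defG : <[a]> <*> <[b]> = G.

Lemma aG : a \in G. Proof. by rewrite -defG -cycle_subG joing_subl. Qed.
Lemma bG : b \in G. Proof. by rewrite -defG -cycle_subG joing_subr. Qed.
Lemma nfG_in i j k : nfG i j k \in G.
Proof. by rewrite /nfG !groupM ?groupX ?groupR ?aG ?bG. Qed.

Lemma G_sub_Sn : G \subset Sn.
Proof.
rewrite -defG join_subG !cycle_subG.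
have aS : a \in Sn.
  have := memSn 1 0 0; by rewrite {1}/nfG !expg0 !mulg1 expg1.
have bS : b \in Sn.
  have := memSn 0 1 0; by rewrite {1}/nfG !expg0 !mulg1 mul1g expg1.
by rewrite aS bS.
Qed.

Lemma Sn_eq : Sn = G.
Proof.
apply/eqP; rewrite eqEsubset G_sub_Sn andbT.
by apply/subsetP => x /imsetP[t _ ->]; rewrite nfG_in.
Qed.

Lemma nfG_surj g : g \in G -> exists i j k, g = nfG i j k.
Proof.
by rewrite -Sn_eq => /imsetP[t _ ->]; exists t.1.1, t.1.2, t.2.
Qed.

Hypothesis cardG : (A * B * C <= #|G|)%N.

Lemma nfG_uniq i j k : nfG i j k = 1 -> [/\ (A %| i)%N, (B %| j)%N & (C %| k)%N].
Proof.
move=> E.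
have inj : {in [pred t : 'I_A * 'I_B * 'I_C | true] &, injective (fun t : 'I_A * 'I_B * 'I_C => nfG t.1.1 t.1.2 t.2)}.
  apply/imset_injP; rewrite eqn_leq leq_imset_card /=.
  rewrite -/Sn Sn_eq (leq_trans _ cardG) //.
  have -> : #|[pred t : 'I_A * 'I_B * 'I_C | true]| = #|{: 'I_A * 'I_B * 'I_C}| by apply: eq_card.
  by rewrite !card_prod !card_ord.
have := inj (Ordinal (ltn_pmod i A0), Ordinal (ltn_pmod j B0), Ordinal (ltn_pmod k C0))
            (Ordinal A0, Ordinal B0, Ordinal C0) isT isT.
rewrite /= -nfG_mod E /nfG !expg0 !mulg1 => /(_ erefl) [] hi hj hk.
by rewrite /dvdn hi hj hk.
Qed.
End Gen.
End NFG.
End GS.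

End P_Gside.
Import P_Gside.

Module P_Kmain.
Set Implicit Arguments. Unset Strict Implicit. Unset Printing Implicit Defensive.
Import GRing.Theory Num.Theory.
Local Open Scope ring_scope.

Section CapK.
Variables (gT : finGroupType) (G : {group gT}) (a b : gT) (A B C : nat).
Local Notation c := [~ a, b]%g.
Hypotheses (defG : (<[a]> <*> <[b]>)%g = G).
Hypotheses (ca : commute a c) (cb : commute b c).
Hypotheses (A0 : (0 < A)%N) (B0 : (0 < B)%N) (C0 : (0 < C)%N).
Hypotheses (aA : (a ^+ A = 1)%g) (bB : (b ^+ B = 1)%g) (cC : (c ^+ C = 1)%g).
Hypotheses (CA : (C %| A)%N) (CB : (C %| B)%N).
Hypothesis cardG : (A * B * C <= #|G|)%N.
Variables d1 e f d2 h d3 : int.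
Hypotheses (hd1 : 0 < d1) (hd2 : 0 < d2) (hd3 : 0 < d3).
Hypotheses (inv1 : memL d1 e f d2 h d3 0 d1 0) (inv2 : memL d1 e f d2 h d3 0 0 d1).
Hypothesis Cd1 : (C%:Z %| d1)%Z.
Local Notation mL := (memL d1 e f d2 h d3).
Hypothesis Pcent : forall n m k, mL (- m) k (- bin2 m) -> mL n (bin2 n) (k + n * m) ->
  [/\ (A%:Z %| n)%Z, (B%:Z %| m)%Z & (C%:Z %| k)%Z].
Hypothesis Psuff : forall n m k, (A%:Z %| n)%Z -> (B%:Z %| m)%Z -> (C%:Z %| k)%Z ->
  mL (- m) k (- bin2 m) /\ mL n (bin2 n) (k + n * m) /\
      mL 0 n 0 /\ mL 0 0 n /\ mL 0 m 0 /\ mL 0 0 m.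

Definition KG : abs_group :=
  @AbsGroup (Kc d1 e f d2 h d3) (Kmul hd1 hd2 hd3) (Kinv hd1 hd2 hd3) (Kone d1 e f d2 h d3)
    (KmulA hd1 hd2 hd3 inv1 inv2) (Kmul1 hd1 hd2 hd3) (KmulV hd1 hd2 hd3 inv1 inv2).

Definition fV (v : V) : gT := let: (n, m, k, p, q) := v in Pz a b A B C n m k.
Definition fK (t : KG) : gT := fV (val t).

Lemma fV_NF v : fV (NF d1 e f d2 h d3 v) = fV v.
Proof.
case: v => [[[[n m] k] p] q]; rewrite NFE /= /Pz /nfG.
congr (_ * _)%g; apply: (ipow_cong2 C0 cC).
rewrite /cong /nf3 /= {2}(divz_eq k d1).
have -> : (k %% d1)%Z - ((k %/ d1)%Z * d1 + (k %% d1)%Z) = - (k %/ d1)%Z * d1 by ring.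
exact: dvdz_mull.
Qed.

Lemma fK_mul (s t : KG) : fK (ag_mul s t) = (fK s * fK t)%g.
Proof.
rewrite /fK /= fV_NF.
case: s => [[[[[n m] k] p] q] hs]; case: t => [[[[[n' m'] k'] p'] q'] ht] /=.
by rewrite (Pz_mul ca cb A0 B0 C0 aA bB cC).
Qed.

Lemma absz_mod_dvd (N : nat) (n : int) : (0 < N)%N ->
  (N %| absz (n %% N%:Z)%Z)%N -> (N%:Z %| n)%Z.
Proof.
move=> N0 dv; apply/dvdz_mod0P.
have h0 : N%:Z != 0 by lia.
have g0 := modz_ge0 n h0.
have lt : (n %% N%:Z)%Z < N%:Z by apply: ltz_pmod; lia.
have : (absz (n %% N%:Z)%Z < N)%N by lia.
move: dv; case E: (absz (n %% N%:Z)%Z) => [|x] dv lt'.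
  by apply/eqP; rewrite -absz_eq0 E.
by have := dvdn_leq (isT : (0 < x.+1)%N) dv; lia.
Qed.

Lemma Pz1 n m k : Pz a b A B C n m k = 1%g <->
  [/\ (A%:Z %| n)%Z, (B%:Z %| m)%Z & (C%:Z %| k)%Z].
Proof.
split.
- move/(nfG_uniq ca cb A0 B0 C0 aA bB cC defG cardG) => [h1 h2 h3].
  by split; apply: absz_mod_dvd.
- move=> [/dvdz_mod0P h1 /dvdz_mod0P h2 /dvdz_mod0P h3].
  by rewrite /Pz h1 h2 h3 /nfG !expg0 !mulg1.
Qed.

Lemma KG_capable : capable G.
Proof.
exists KG, fK; split.
- exact: fK_mul.
- by move=> t; rewrite /fK /fV; case: (val t) => [[[[n m] k] p] q]; apply: nfG_in.
- move=> g /(nfG_surj ca cb A0 B0 C0 aA bB cC defG) [i [j [k ->]]].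
  exists (exist _ (NF d1 e f d2 h d3 (i%:Z, j%:Z, k%:Z, 0, 0)) (NF_red e f h hd1 hd2 hd3 _)).
  rewrite /fK; change (fV (NF d1 e f d2 h d3 (i%:Z, j%:Z, k%:Z, 0, 0)) = nfG a b i j k).
  rewrite fV_NF /= /Pz !modz_nat !absz_nat.
  by rewrite -(nfG_mod aA bB cC).
- move=> t; split.
  + case: t => [[[[[n m] k] p] q] ht]; rewrite /fK /= => /Pz1 [h1 h2 h3].
    have [H1 [H2 [H3 [H4 [H5 H6]]]]] := Psuff h1 h2 h3.
    move=> y; exact: (central_suff hd1 hd2 hd3 (exist _ (n, m, k, p, q) ht) H1 H2 H3 H4 H5 H6).
  + move=> Hc; have := central_nec Hc.
    case: t Hc => [[[[[n m] k] p] q] ht] Hc /= [H1 H2].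
    by rewrite /fK /=; apply/Pz1; apply: Pcent.
Qed.
End CapK.

End P_Kmain.
Import P_Kmain.

Module P_Kcore.
Set Implicit Arguments. Unset Strict Implicit. Unset Printing Implicit Defensive.
Local Open Scope group_scope.

Section Core.
Variables (GK : groupType) (x y : GK) (M P : nat).
Local Notation z := [~ x, y].
Local Notation w := [~ z, x].
Local Notation u := [~ z, y].
Hypotheses (wc : forall g, commute w g) (uc : forall g, commute u g).
Hypotheses (Mcen : forall g, commute (y ^+ M) g) (Pcen : forall g, commute (z ^+ P) g).

Lemma conj_comm (s g : GK) : s ^ g = s * [~ s, g].
Proof. by rewrite commgEl mulVKg. Qed.

Lemma conj_central (s g : GK) : commute s g -> s ^ g = s.
Proof. by move=> H; rewrite conjgE H mulKg. Qed.

Lemma wP : w ^+ P = 1.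
Proof.
have := conj_central (Pcen x); rewrite conjXg conj_comm expgMn; last exact: commute_sym (wc _).
by move/(canRL (mulKg _)); rewrite mulVg.
Qed.
Lemma uP : u ^+ P = 1.
Proof.
have := conj_central (Pcen y); rewrite conjXg conj_comm expgMn; last exact: commute_sym (uc _).
by move/(canRL (mulKg _)); rewrite mulVg.
Qed.

Lemma wC g n : commute (w ^+ n) g.
Proof. exact: commute_sym (commuteX n (commute_sym (wc g))). Qed.
Lemma uC g n : commute (u ^+ n) g.
Proof. exact: commute_sym (commuteX n (commute_sym (uc g))). Qed.

Lemma conjyX m : x ^ (y ^+ m) = x * z ^+ m * u ^+ 'C(m, 2).
Proof.
elim: m => [|m IH]; first by rewrite !expg0 conjg1 !mulg1.
rewrite expgSr conjgM IH !conjMg !conjXg (conj_central (uc y)) !conj_comm.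
rewrite expgMn; last exact: commute_sym (uc _).
have -> : 'C(m.+1, 2) = m + 'C(m, 2) by rewrite binS bin1 addnC.
by rewrite expgnDr expgS !mulgA.
Qed.

Lemma zMu : z ^+ M * u ^+ 'C(M, 2) = 1.
Proof.
have := conj_central (commute_sym (Mcen x)); rewrite conjyX -mulgA.
by move=> H; apply: (mulgI x); rewrite mulg1.
Qed.

Lemma pow_twisted (X Z W : GK) : (forall g, commute W g) ->
  (forall n, Z ^+ n * X = X * (Z ^+ n * W ^+ n)) ->
  forall n, (X * Z) ^+ n = X ^+ n * Z ^+ n * W ^+ 'C(n, 2).
Proof.
move=> Wc zx n.
have WC g m : commute (W ^+ m) g by exact: commute_sym (commuteX m (commute_sym (Wc g))).
elim: n => [|n IH]; first by rewrite !expg0 !mulg1.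
rewrite expgSr IH !mulgA -(mulgA _ (W ^+ _) X) (WC X) mulgA.
rewrite -(mulgA (X ^+ n) (Z ^+ n) X) zx !mulgA.
rewrite -(mulgA _ (W ^+ 'C(n, 2)) Z) (WC Z) mulgA.
rewrite -(mulgA _ (W ^+ n) Z) (WC Z) mulgA.
have -> : 'C(n.+1, 2) = n + 'C(n, 2) by rewrite binS bin1 addnC.
by rewrite expgnDr -expgSr !mulgA -(mulgA _ _ Z) -expgSr.
Qed.

Lemma conjxX n : (x * z) ^+ n = x ^+ n * z ^+ n * w ^+ 'C(n, 2).
Proof.
apply: pow_twisted => // m.
rewrite [LHS]conjgC conjXg conj_comm expgMn //; exact: commute_sym (wc _).
Qed.

Lemma core t N : N = (M * t)%N -> (P %| t * 'C(M, 2))%N -> (P %| 'C(N, 2))%N ->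
  commute (x ^+ N) y.
Proof.
move=> EN /dvdnP[q1 E1] /dvdnP[q2 E2].
apply/commgP/conjg_fixP; rewrite conjXg conj_comm conjxX.
have zM : z ^+ M = (u ^+ 'C(M, 2))^-1 by rewrite -(mulg1_eq zMu) invgK.
have zN : z ^+ N = 1.
  by rewrite EN expgnA zM expVgn -expgnA mulnC E1 mulnC expgnA uP expg1n invg1.
have wN : w ^+ 'C(N, 2) = 1 by rewrite E2 mulnC expgnA wP expg1n.
by rewrite zN wN !mulg1.
Qed.
End Core.

End P_Kcore.
Import P_Kcore.

Module P_Konly.
Set Implicit Arguments. Unset Strict Implicit. Unset Printing Implicit Defensive.
Local Open Scope group_scope.

Definition KT (K : abs_group) : Type := ag_carrier K.
HB.instance Definition _ (K : abs_group) := gen_eqMixin (KT K).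
HB.instance Definition _ (K : abs_group) := gen_choiceMixin (KT K).

Section KTgroup.
Variable K : abs_group.
Local Notation mul := (@ag_mul K).
Local Notation inv := (@ag_inv K).
Local Notation one := (@ag_one K).
Lemma ag_mulgV (x : KT K) : mul x (inv x) = one.
Proof.
rewrite -[mul x (inv x)]ag_mul1 -{1}(ag_mulV (inv x)) -ag_mulA.
by rewrite (ag_mulA (inv x) x (inv x)) ag_mulV ag_mul1 ag_mulV.
Qed.
Lemma ag_mulg1 (x : KT K) : mul x one = x.
Proof. by rewrite -(ag_mulV x) ag_mulA ag_mulgV ag_mul1. Qed.
HB.instance Definition _ := isGroup.Build (KT K) (@ag_mulA K) (@ag_mul1 K) ag_mulg1
  (@ag_mulV K) ag_mulgV.
End KTgroup.


Section OnlyIf.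
Variables (gT : finGroupType) (G : {group gT}) (a b : gT) (A B C N t : nat).
Local Notation c := [~ a, b].
Hypotheses (defG : <[a]> <*> <[b]> = G).
Hypotheses (ca : commute a c) (cb : commute b c).
Hypotheses (A0 : 0 < A) (B0 : 0 < B) (C0 : 0 < C).
Hypotheses (aA : a ^+ A = 1) (bB : b ^+ B = 1) (cC : c ^+ C = 1).
Hypothesis cardG : (A * B * C <= #|G|)%N.
Hypotheses (HN : N = (B * t)%N) (hP1 : (C %| t * 'C(B, 2))%N) (hP2 : (C %| 'C(N, 2))%N).
Hypotheses (N0 : 0 < N) (NA : N < A).

Lemma not_capable : capable G -> False.
Proof.
case=> K [f [fM fG fS fK]].
have fM' : forall x y : KT K, f (x * y) = f x * f y := fM.
have f1 : f (1 : KT K) = 1.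
  have H := fM' 1 1; rewrite mulg1 in H.
  have : (f (1 : KT K))^-1 * f (1 : KT K) = (f (1 : KT K))^-1 * (f (1 : KT K) * f (1 : KT K)) by rewrite -H.
  by rewrite mulKg mulVg => <-.
have fV : forall x : KT K, f x^-1 = (f x)^-1.
  move=> x; have := fM' x^-1 x; rewrite mulVg f1 => /esym /mulg1_eq <-.
  by rewrite invgK.
have fX : forall (x : KT K) n, f (x ^+ n) = f x ^+ n.
  move=> x; elim=> [|n IH]; first by rewrite !expg0 f1.
  by rewrite !expgS fM' IH.
have fR : forall x y : KT K, f [~ x, y] = [~ f x, f y].
  by move=> x y; rewrite /commg /conjg !fM' !fV.
have ker : forall g : KT K, f g = 1 -> forall h, commute g h.
  by move=> g /fK.
have [x fx] : exists x : KT K, f x = a := fS a (aG defG).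
have [y fy] : exists y : KT K, f y = b := fS b (bG defG).
have cxy : commute (x ^+ N) y.
  apply: (@core _ x y B C) hP1 hP2 => //.
  - by move=> g; apply: ker; rewrite fR fR fx fy; apply/eqP/commgP; exact: commute_sym ca.
  - by move=> g; apply: ker; rewrite fR fR fx fy; apply/eqP/commgP; exact: commute_sym cb.
  - by move=> g; apply: ker; rewrite fX fy bB.
  - by move=> g; apply: ker; rewrite fX fR fx fy cC.
have cxx : forall n, commute (x ^+ N) (x ^+ n).
  by move=> n; apply: commuteX2; apply: commute_refl.
have cxz : commute (x ^+ N) [~ x, y].
  rewrite /commg /conjg; apply: commuteM; first by apply: commuteV; rewrite -[x]expg1.
  apply: commuteM; first exact: commuteV.
  by apply: commuteM; [rewrite -[x]expg1 | ].
have cent : forall g : KT K, commute (x ^+ N) g.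
  move=> g; have [i [j [k Eg]]] := nfG_surj ca cb A0 B0 C0 aA bB cC defG (fG g).
  set h := x ^+ i * y ^+ j * [~ x, y] ^+ k.
  have fh : f h = nfG a b i j k by rewrite /h !fM' !fX fR fx fy.
  have hg : commute (h^-1 * g) (x ^+ N).
    by apply: ker; rewrite fM' fV fh -Eg mulVg.
  rewrite -(mulKVg h g); apply: commuteM; last exact: commute_sym hg.
  rewrite /h; apply: commuteM; [apply: commuteM|]; first exact: cxx.
  - exact: commuteX.
  - exact: commuteX.
have : f (x ^+ N) = 1 by apply/fK => g; exact: cent.
rewrite fX fx => aN.
have := nfG_uniq ca cb A0 B0 C0 aA bB cC defG cardG (i := N) (j := 0) (k := 0).
rewrite /nfG aN !expg0 !mulg1 => /(_ erefl) [dv _ _].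
by have := dvdn_leq N0 dv; rewrite leqNgt NA.
Qed.
End OnlyIf.

End P_Konly.
Import P_Konly.

Module P_Main.
Set Implicit Arguments. Unset Strict Implicit. Unset Printing Implicit Defensive.
Import GRing.Theory Num.Theory.
Local Open Scope ring_scope.

Section Caps.
Variables (gT : finGroupType) (G : {group gT}) (a b : gT) (A B C : nat).
Local Notation c := [~ a, b]%g.
Hypotheses (defG : (<[a]> <*> <[b]>)%g = G).
Hypotheses (ca : commute a c) (cb : commute b c).
Hypotheses (aA : (a ^+ A = 1)%g) (bB : (b ^+ B = 1)%g) (cC : (c ^+ C = 1)%g).
Hypothesis cardG : (A * B * C <= #|G|)%N.

Lemma cap1 (Cn rn : nat) : (0 < Cn)%N -> (0 < rn)%N ->
  A = (2 * (Cn * rn))%N -> B = A -> C = Cn -> capable G.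
Proof.
move=> C0 r0 EA EB EC.
have eA : A%:Z = 2 * (Cn%:Z * rn%:Z) by rewrite EA !PoszM.
have hC : (0 < Cn%:Z)%R by lia.
have hr : (0 < rn%:Z)%R by lia.
apply: (@KG_capable _ _ _ _ A B C defG ca cb _ _ _ aA bB cC _ _ cardG
   (2 * (Cn%:Z * rn%:Z)) 0 0 Cn%:Z 0 Cn%:Z).
- by rewrite EA; lia.
- by rewrite EB EA; lia.
- by rewrite EC.
- by rewrite EC EA dvdn_mull // dvdn_mulr.
- by rewrite EC EB EA dvdn_mull // dvdn_mulr.
- by lia.
- exact: hC.
- exact: hC.
- exact: c1_inv1.
- exact: c1_inv2.
- by rewrite EC dvdz_mull // dvdz_mulr.
- move=> n m k H1 H2; have [] := c1_P1 H1 H2.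
  by rewrite EB eA EC.
- move=> n m k; rewrite EB eA EC; exact: c1_P2.
Qed.

Lemma cap2 (Hn : nat) : (0 < Hn)%N ->
  A = (2 * Hn)%N -> B = A -> C = A -> capable G.
Proof.
move=> H0 EA EB EC.
have eA : A%:Z = 2 * Hn%:Z by rewrite EA !PoszM.
have hH : (0 < Hn%:Z)%R by lia.
apply: (@KG_capable _ _ _ _ A B C defG ca cb _ _ _ aA bB cC _ _ cardG
   (2 * Hn%:Z) Hn%:Z 0 Hn%:Z Hn%:Z (2 * Hn%:Z)).
- by rewrite EA; lia.
- by rewrite EB EA; lia.
- by rewrite EC EA; lia.
- by rewrite EC.
- by rewrite EC EB.
- by lia.
- exact: hH.
- by lia.
- exact: c2_inv1.
- exact: c2_inv2.
- by rewrite EC eA.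
- move=> n m k H1 H2; have [] := c2_P1 hH H1 H2.
  by rewrite EC EB eA.
- move=> n m k; rewrite EC EB eA; exact: c2_P2.
Qed.

Lemma cap3 (Hn : nat) : (0 < Hn)%N ->
  A = (4 * Hn)%N -> B = (2 * Hn)%N -> C = B -> capable G.
Proof.
move=> H0 EA EB EC.
have eA : A%:Z = 4 * Hn%:Z by rewrite EA !PoszM.
have eB : B%:Z = 2 * Hn%:Z by rewrite EB !PoszM.
have hH : (0 < Hn%:Z)%R by lia.
apply: (@KG_capable _ _ _ _ A B C defG ca cb _ _ _ aA bB cC _ _ cardG
   (2 * Hn%:Z) 0 Hn%:Z (2 * Hn%:Z) 0 (2 * Hn%:Z)).
- by rewrite EA; lia.
- by rewrite EB; lia.
- by rewrite EC EB; lia.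
- by rewrite EC EB EA (_ : 4 = 2 * 2)%N // -mulnA dvdn_mull.
- by rewrite EC.
- by lia.
- by lia.
- by lia.
- exact: c3_inv1.
- exact: c3_inv2.
- by rewrite EC eB.
- move=> n m k H1 H2; have [] := c3_P1 hH H1 H2.
  by rewrite EC eB eA.
- move=> n m k; rewrite EC eB eA; exact: c3_P2.
Qed.
End Caps.

Local Close Scope ring_scope.
Lemma bin2pow k : 'C(2 ^ k.+1, 2) = (2 ^ k * (2 ^ k.+1).-1)%N.
Proof. by rewrite binomial.bin2 expnS -mulnA mul2n doubleK. Qed.


End P_Main.
Import P_Main.

Theorem corollary5p6 (alpha beta gamma : nat)
  (hg : 0 < gamma) (hgb : gamma <= beta) (hba : beta <= alpha)
  (gT : finGroupType) (G : {group gT}) :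
  (G \isog Grp (a : b : (a ^+ (2 ^ alpha), b ^+ (2 ^ beta),
                         [~ a, b] ^+ (2 ^ gamma), [~ a, b, a], [~ a, b, b])))%g ->
  (capable G <-> alpha = beta \/ (alpha = beta.+1 /\ gamma = beta)).
Proof.
move=> iso.
have := isoGrp_hom iso; case/existsP => -[a b] /=; rewrite !xpair_eqE /=.
case/andP => /eqP defG /andP [/eqP aA /andP [/eqP bB /andP [/eqP cC /andP [cca ccb]]]].
have ca : commute a [~ a, b]%g by apply: commute_sym; apply/commgP.
have cb : commute b [~ a, b]%g by apply: commute_sym; apply/commgP.
have EC : Cm gamma.-1 = (2 ^ gamma)%N by rewrite /Cm prednK.
have EB : Bm gamma.-1 (beta - gamma) = (2 ^ beta)%N by rewrite /Bm EC -expnD subnKC.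
have EA : Am gamma.-1 (beta - gamma) (alpha - beta) = (2 ^ alpha)%N.
  by rewrite /Am EB -expnD subnKC.
have cardG : (2 ^ alpha * 2 ^ beta * 2 ^ gamma <= #|G|)%N.
  have hM := M_homg gamma.-1 (beta - gamma) (alpha - beta).
  rewrite EA EB EC in hM.
  have := iso _ [set: Mt gamma.-1 (beta - gamma) (alpha - beta)]%G.
  rewrite hM => /card_homg dv.
  by rewrite -EA -EB -EC -card_M dvdn_leq.
have hb1 : 0 < beta by apply: leq_trans hgb.
split.
- move=> cap.
  case: (eqVneq alpha beta) => [-> | nab]; first by left.
  case: (boolP ((alpha == beta.+1) && (gamma == beta))) => [/andP[/eqP -> /eqP ->] | nc].
    by right.
  exfalso.
  have hga : gamma <= alpha - 2.
    move: nc; rewrite negb_and => /orP[] /eqP ?; lia.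
  have [al Eal] : exists al, alpha = al.+2 by exists (alpha - 2); lia.
  have [b' Eb'] : exists b', beta = b'.+1 by exists beta.-1; lia.
  rewrite Eal in aA cardG hga hba nab nc.
  apply: (not_capable (N := 2 ^ al.+1) (t := 2 ^ (al.+1 - beta)) defG ca cb _ _ _ aA bB cC cardG _ _ _ _ _ cap).
  - by rewrite expn_gt0.
  - by rewrite expn_gt0.
  - by rewrite expn_gt0.
  - by rewrite -expnD subnKC //; lia.
  - rewrite {2}Eb' bin2pow mulnA -expnD dvdn_mulr // dvdn_exp2l //; lia.
  - rewrite bin2pow dvdn_mulr // dvdn_exp2l //; lia.
  - by rewrite expn_gt0.
  - by rewrite ltn_exp2l.
- have [b' Eb'] : exists b', beta = b'.+1 by exists beta.-1; lia.
  case=> [Eab | [Eab Egb]].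
  + case: (ltngtP gamma beta) => [lgb | lbg | Egb].
    * rewrite Eab in aA cardG.
      apply: (cap1 defG ca cb aA bB cC cardG (Cn := 2 ^ gamma) (rn := 2 ^ (b' - gamma))).
      - by rewrite expn_gt0.
      - by rewrite expn_gt0.
      - by rewrite -expnD subnKC ?Eb' ?expnS //; lia.
      - by [].
      - by [].
    * by exfalso; lia.
    * rewrite Eab in aA cardG; rewrite Egb in cC cardG.
      apply: (cap2 defG ca cb aA bB cC cardG (Hn := 2 ^ b')).
      - by rewrite expn_gt0.
      - by rewrite Eb' expnS.
      - by [].
      - by [].
  + rewrite Eab in aA cardG; rewrite Egb in cC cardG.
    apply: (cap3 defG ca cb aA bB cC cardG (Hn := 2 ^ b')).
    * by rewrite expn_gt0.
    * by rewrite Eb' !expnS mulnA.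
    * by rewrite Eb' expnS.
    * by [].
Qed.
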